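(* Let $(\mathcal{S},\mathcal{A},r,C,P,\mu,D)$ be a finite constrained Markov decision process with discount factor $\gamma\in[0,1)$, and let $P_m(s'|s,a)$ be a second (model) transition probability on the same finite state and action spaces. Let $\pi(a|s)$ and $\pi'(a|s)$ be arbitrary stochastic policies, and let $\Delta J(\pi,\pi') = J(\pi')-J(\pi)$ be the difference of their expected discounted returns under the true dynamics $P$. Then $$\frac{L^{\pi}_m(\pi')}{1-\gamma} - \frac{4\delta^{\max}\epsilon}{1-\gamma} \;\le\; \Delta J(\pi,\pi') \;\le\; \frac{L^{\pi}_m(\pi')}{1-\gamma} + \frac{4\delta^{\max}\epsilon}{1-\gamma},$$ where $$L^{\pi}_m(\pi') = \mathbb{E}_{s\sim d^{\pi}_m,\, a\sim\pi}\Big[\frac{\pi'(a|s)}{\pi(a|s)}A^{\pi}_m(s,a)\Big],\qquad \delta^{\max} = \max_{s,a,s'}\big|r(s,a,s')+\gamma V^{\pi}_m(s')-V^{\pi}_m(s)\big|,$$ $$\epsilon = \epsilon_\pi\epsilon_m + \frac{\gamma}{1-\gamma}\big(\epsilon_\pi^2 + 2\epsilon_\pi\epsilon_m\big),\quad \epsilon_\pi = \max_s D_{TV}\big(\pi'(\cdot|s)\,\|\,\pi(\cdot|s)\big),\quad \epsilon_m = \max_{s,a} D_{TV}\big(P(\cdot|s,a)\,\|\,P_m(\cdot|s,a)\big).$$ The same two-sided bound holds for the expected discounted cost returns of any cost function $c_i$, with $r$ replaced by $c_i$ throughout (i.e. $J$, $V^\pi_m$, $A^\pi_m$ replaced by $J_{c_i}$,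 $V^\pi_{m,c_i}$, $A^\pi_{m,c_i}$).
   Context: A finite CMDP $(\mathcal{S},\mathcal{A},r,C,P,\mu,D)$ has finite state space $\mathcal{S}$, finite action space $\mathcal{A}$, reward $r:\mathcal{S}\times\mathcal{A}\times\mathcal{S}\to\mathbb{R}$, a set $C$ of cost functions $c_i:\mathcal{S}\times\mathcal{A}\times\mathcal{S}\to\mathbb{R}$, transition probability $P(s'|s,a)$, start-state distribution $\mu$, and cost limits $D$. The start distribution $\mu$ is the same under $P$ and under the model $P_m$. For a policy $\pi$, $J(\pi)=\mathbb{E}_{\tau\sim(\pi,P)}[\sum_{t\ge0}\gamma^t r(s_t,a_t,s_{t+1})]$ with $s_0\sim\mu$, $a_t\sim\pi(\cdot|s_t)$, $s_{t+1}\sim P(\cdot|s_t,a_t)$; $J_{c_i}$ is defined analogously with $c_i$. Under model dynamics: $V^\pi_m(s)=\mathbb{E}_{\tau\sim(\pi,P_m)}[\sum_t\gamma^t r(s_t,a_t,s_{t+1})\mid s_0=s]$, $Q^\pi_m(s,a)$ the same conditioned additionally on $a_0=a$, and $A^\pi_m(s,a)=Q^\pi_m(s,a)-V^\pi_m(s)$; cost counterparts $V^\pi_{m,c_i}$, $A^\pi_{m,c_i}$ are defined with $c_i$ in place of $r$. The discounted model state distribution is $d^\pi_m(s)=(1-\gamma)\sum_{t\ge0}\gamma^t\Pr(S_t=s\mid \pi,P_m)$. The total variation distance is $D_{TV}(p\|q)=\frac12\sum_x|p(x)-q(x)|$. The importance-weighted expectation in $L^\pi_m(\pi')$ is understood as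 $\mathbb{E}_{s\sim d^\pi_m}[\sum_a \pi'(a|s)A^\pi_m(s,a)]$. *)

(* Defs.v *)
From HB Require Import structures.
From mathcomp Require Import all_boot all_order all_algebra.
From mathcomp Require Import all_classical all_reals all_analysis.
Set Implicit Arguments. Unset Strict Implicit. Unset Printing Implicit Defensive.
Import Order.TTheory GRing.Theory Num.Theory.
Import numFieldNormedType.Exports.
Local Open Scope ring_scope.

Section FiniteCMDP.
Variables (R : realType) (S A : finType).

Definition is_distr (T : finType) (p : T -> R) : Prop :=
  (forall x, 0 <= p x) /\ \sum_(x : T) p x = 1.

(* stochastic policy pi(a|s) = pi s a *)
Definition is_policy (pi : S -> A -> R) : Prop := forall s, is_distr (pi s).

(* transition kernel P(s'|s,a) = P s a s' *)
Definition is_kernel (P : S -> A -> S -> R) : Prop :=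
  forall s a, is_distr (P s a).

(* joint law of (S_t, A_t) under dynamics P and policy pi, started from the
   joint law rho0 of (S_0, A_0) *)
Fixpoint sa_law (P : S -> A -> S -> R) (pi : S -> A -> R)
    (rho0 : S -> A -> R) (t : nat) : S -> A -> R :=
  match t with
  | 0 => rho0
  | t'.+1 => fun s' a' =>
      (\sum_(s : S) \sum_(a : A) sa_law P pi rho0 t' s a * P s a s') * pi s' a'
  end.

Definition exp_step (P : S -> A -> S -> R) (pi : S -> A -> R)
    (f : S -> A -> S -> R) (rho0 : S -> A -> R) (t : nat) : R :=
  \sum_(s : S) \sum_(a : A) \sum_(s' : S) sa_law P pi rho0 t s a * P s a s' * f s a s'.

Definition disc_return (gamma : R) (P : S -> A -> S -> R) (pi : S -> A -> R)
    (f : S -> A -> S -> R) (rho0 : S -> A -> R) : R :=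
  limn (series (fun t => gamma ^+ t * exp_step P pi f rho0 t)).

(* J(pi) (or J_c(pi)) under dynamics P with s_0 ~ mu, a_t ~ pi *)
Definition Jret (gamma : R) (P : S -> A -> S -> R) (mu : S -> R)
    (pi : S -> A -> R) (f : S -> A -> S -> R) : R :=
  disc_return gamma P pi f (fun s a => mu s * pi s a).

(* V^pi_m(s) : s_0 = s, a_t ~ pi *)
Definition Vfun (gamma : R) (Pm : S -> A -> S -> R) (pi : S -> A -> R)
    (f : S -> A -> S -> R) (s : S) : R :=
  disc_return gamma Pm pi f (fun s0 a0 => (s0 == s)%:R * pi s0 a0).

(* Q^pi_m(s,a) : s_0 = s, a_0 = a, a_t ~ pi for t >= 1 *)
Definition Qfun (gamma : R) (Pm : S -> A -> S -> R) (pi : S -> A -> R)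
    (f : S -> A -> S -> R) (s : S) (a : A) : R :=
  disc_return gamma Pm pi f (fun s0 a0 => ((s0 == s) && (a0 == a))%:R).

Definition Afun (gamma : R) (Pm : S -> A -> S -> R) (pi : S -> A -> R)
    (f : S -> A -> S -> R) (s : S) (a : A) : R :=
  Qfun gamma Pm pi f s a - Vfun gamma Pm pi f s.

Definition dstate (gamma : R) (Pm : S -> A -> S -> R) (mu : S -> R)
    (pi : S -> A -> R) (s : S) : R :=
  (1 - gamma) * limn (series (fun t =>
     gamma ^+ t * \sum_(a : A) sa_law Pm pi (fun s0 a0 => mu s0 * pi s0 a0) t s a)).

Definition Lsurr (gamma : R) (Pm : S -> A -> S -> R) (mu : S -> R)
    (pi pi' : S -> A -> R) (f : S -> A -> S -> R) : R :=
  \sum_(s : S) dstate gamma Pm mu pi s *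
     \sum_(a : A) pi' s a * Afun gamma Pm pi f s a.

Definition dTV (T : finType) (p q : T -> R) : R :=
  2^-1 * \sum_(x : T) `|p x - q x|.

Definition eps_pi (pi pi' : S -> A -> R) : R :=
  \big[Num.max/0]_(s : S) dTV (pi' s) (pi s).

Definition eps_m (P Pm : S -> A -> S -> R) : R :=
  \big[Num.max/0]_(sa : S * A) dTV (P sa.1 sa.2) (Pm sa.1 sa.2).

Definition delta_max (gamma : R) (Pm : S -> A -> S -> R) (pi : S -> A -> R)
    (f : S -> A -> S -> R) : R :=
  \big[Num.max/0]_(x : S * A * S)
     `|f x.1.1 x.1.2 x.2 + gamma * Vfun gamma Pm pi f x.2
        - Vfun gamma Pm pi f x.1.1|.

Definition eps_total (gamma : R) (P Pm : S -> A -> S -> R) (pi pi' : S -> A -> R) : R :=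
  eps_pi pi pi' * eps_m P Pm
  + gamma / (1 - gamma) * (eps_pi pi pi' ^+ 2 + 2 * eps_pi pi pi' * eps_m P Pm).

Definition two_sided_bound (gamma : R) (P Pm : S -> A -> S -> R) (mu : S -> R)
    (pi pi' : S -> A -> R) (f : S -> A -> S -> R) : Prop :=
  let dJ := Jret gamma P mu pi' f - Jret gamma P mu pi f in
  let L := Lsurr gamma Pm mu pi pi' f in
  let err := 4 * delta_max gamma Pm pi f * eps_total gamma P Pm pi pi' in
  L / (1 - gamma) - err / (1 - gamma) <= dJ /\
  dJ <= L / (1 - gamma) + err / (1 - gamma).

End FiniteCMDP.

(* Main.v *)
Require Import Defs.
From HB Require Import structures.
From mathcomp Require Import all_boot all_order all_algebra.
From mathcomp Require Import all_classical all_reals all_analysis.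
From mathcomp Require Import ring lra.
Import Order.TTheory GRing.Theory Num.Theory.
Import numFieldNormedType.Exports.
Local Open Scope ring_scope.
Local Open Scope classical_set_scope.
Set Implicit Arguments. Unset Strict Implicit. Unset Printing Implicit Defensive.

Section Lim.
Variable R : realType.

Lemma cvg_sumf (I : finType) (u : I -> R ^nat) :
  (forall i, cvgn (u i)) ->
  (fun n => \sum_(i : I) u i n) @ \oo --> \sum_(i : I) limn (u i).
Proof.
move=> cu.
have H : forall (r : seq I), (fun n => \sum_(i <- r) u i n) @ \oo --> \sum_(i <- r) limn (u i).
  elim=> [|i r IH].
    under eq_fun do rewrite big_nil. rewrite big_nil. exact: cvg_cst.
  under eq_fun do rewrite big_cons. rewrite big_cons.
  exact: cvgD.
exact: H.
Qed.

Lemma limn_sumf (I : finType) (u : I -> R ^nat) :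
  (forall i, cvgn (u i)) ->
  limn (fun n => \sum_(i : I) u i n) = \sum_(i : I) limn (u i).
Proof. by move=> cu; apply/cvg_lim => //; apply: cvg_sumf. Qed.

Lemma is_cvg_sumf (I : finType) (u : I -> R ^nat) :
  (forall i, cvgn (u i)) -> cvgn (fun n => \sum_(i : I) u i n).
Proof. by move=> cu; apply/cvg_ex; eexists; apply: cvg_sumf. Qed.

Lemma limn_scale (c : R) (u : R ^nat) : cvgn u -> limn (fun n => c * u n) = c * limn u.
Proof. by move=> cu; apply/cvg_lim => //; apply: cvgMl_tmp. Qed.

Lemma is_cvg_scale (c : R) (u : R ^nat) : cvgn u -> cvgn (fun n => c * u n).
Proof. by move=> cu; apply/cvg_ex; exists (c * limn u); apply: cvgMl_tmp. Qed.

Lemma series_shift (u : R ^nat) : cvgn (series u) ->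
  cvgn (series (fun n => u n.+1)) /\
  limn (series u) = u 0%N + limn (series (fun n => u n.+1)).
Proof.
move=> cu.
have E : series (fun n => u n.+1) = fun n => series u n.+1 - u 0%N.
  apply/funext => n; rewrite /series /= big_nat_recl //.
  by rewrite addrC addKr.
have C : series (fun n => u n.+1) @ \oo --> limn (series u) - u 0%N.
  rewrite E; apply: cvgB; last exact: cvg_cst.
  by rewrite (cvg_shiftS (series u)).
split; first by apply/cvg_ex; eexists; exact: C.
by rewrite (cvg_lim _ C) // addrC subrK.
Qed.

Lemma lim_series1 (I : finType) (c : I -> R) (w : I -> R ^nat) :
  (forall i, cvgn (series (w i))) ->
  cvgn (series (fun t => \sum_(i : I) c i * w i t)) /\
  limn (series (fun t => \sum_(i : I) c i * w i t)) = \sum_(i : I) c i * limn (series (w i)).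
Proof.
move=> cw.
have E : series (fun t => \sum_(i : I) c i * w i t) = fun n => \sum_(i : I) c i * series (w i) n.
  apply/funext => n; rewrite /series /= exchange_big /=.
  by apply: eq_bigr => i _; rewrite mulr_sumr.
rewrite E; split.
  by apply: is_cvg_sumf => i; apply: is_cvg_scale.
rewrite limn_sumf; last by move=> i; apply: is_cvg_scale.
by apply: eq_bigr => i _; rewrite limn_scale.
Qed.

End Lim.

Section MDP.
Variables (R : realType) (S A : finType).
Variable gamma : R.
Hypothesis g0 : 0 <= gamma.
Hypothesis g1 : gamma < 1.

Lemma lim_series2 (c : S -> A -> R) (w : S -> A -> R ^nat) :
  (forall s a, cvgn (series (w s a))) ->
  cvgn (series (fun t => \sum_(s : S) \sum_(a : A) c s a * w s a t)) /\
  limn (series (fun t => \sum_(s : S) \sum_(a : A) c s a * w s a t)) =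
    \sum_(s : S) \sum_(a : A) c s a * limn (series (w s a)).
Proof.
move=> cw.
have cs : forall s, cvgn (series (fun t => \sum_(a : A) c s a * w s a t)).
  by move=> s; case: (lim_series1 (c s) (cw s)).
have := lim_series1 (fun _ => 1) cs.
have E : (fun t => \sum_(s : S) 1 * \sum_(a : A) c s a * w s a t) =
         (fun t => \sum_(s : S) \sum_(a : A) c s a * w s a t).
  by apply/funext => t; under eq_bigr do rewrite mul1r.
rewrite E; move=> [C L]; split => //; rewrite L.
apply: eq_bigr => s _; rewrite mul1r.
by case: (lim_series1 (c s) (cw s)).
Qed.

Definition occ (K : S -> A -> S -> R) (sg : S -> A -> R) (rho0 : S -> A -> R) (s : S) (a : A) : R :=
  limn (series (fun t => gamma ^+ t * sa_law K sg rho0 t s a)).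

Lemma sa_law_mass (K : S -> A -> S -> R) (sg rho0 : S -> A -> R) t : is_kernel K -> is_policy sg ->
  \sum_(s : S) \sum_(a : A) `|sa_law K sg rho0 t s a| <= \sum_(s : S) \sum_(a : A) `|rho0 s a|.
Proof.
move=> HK Hs; elim: t => [|t IH] //=.
apply: le_trans IH.
have -> : \sum_(s : S) \sum_(a : A) `|(\sum_(s0 : S) \sum_(a0 : A) sa_law K sg rho0 t s0 a0 * K s0 a0 s) * sg s a|
   = \sum_(s : S) `|\sum_(s0 : S) \sum_(a0 : A) sa_law K sg rho0 t s0 a0 * K s0 a0 s|.
  apply: eq_bigr => s _.
  under eq_bigr do rewrite normrM (ger0_norm ((Hs s).1 _)).
  by rewrite -mulr_sumr (Hs s).2 mulr1.
apply: (@le_trans _ _ (\sum_(s : S) \sum_(s0 : S) \sum_(a0 : A) `|sa_law K sg rho0 t s0 a0| * K s0 a0 s)).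
  apply: ler_sum => s _.
  apply: le_trans (ler_norm_sum _ _ _) _; apply: ler_sum => s0 _.
  apply: le_trans (ler_norm_sum _ _ _) _; apply: ler_sum => a0 _.
  by rewrite normrM (ger0_norm ((HK s0 a0).1 _)).
rewrite exchange_big /=; apply: ler_sum => s0 _.
rewrite exchange_big /=; apply: ler_sum => a0 _.
by rewrite -mulr_sumr (HK s0 a0).2 mulr1.
Qed.

Lemma sa_law_bound (K : S -> A -> S -> R) (sg rho0 : S -> A -> R) t s a :
  is_kernel K -> is_policy sg ->
  `|sa_law K sg rho0 t s a| <= \sum_(s : S) \sum_(a : A) `|rho0 s a|.
Proof.
move=> HK Hs; apply: le_trans (sa_law_mass rho0 t HK Hs).
rewrite (bigD1 s) //= (bigD1 a) //= -addrA lerDl.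
apply: addr_ge0; first by apply: sumr_ge0.
by apply: sumr_ge0 => i _; apply: sumr_ge0.
Qed.

Lemma occ_cvg (K : S -> A -> S -> R) (sg rho0 : S -> A -> R) s a :
  is_kernel K -> is_policy sg ->
  cvgn (series (fun t => gamma ^+ t * sa_law K sg rho0 t s a)).
Proof.
move=> HK Hs; apply: normed_cvg.
set m := \sum_(s : S) \sum_(a : A) `|rho0 s a|.
have m0 : 0 <= m by apply: sumr_ge0 => i _; apply: sumr_ge0.
apply: (@series_le_cvg _ _ (geometric m gamma)).
- by move=> n; exact: normr_ge0.
- by move=> n; rewrite /geometric /= mulr_ge0 // exprn_ge0.
- move=> n; rewrite /geometric /= normrM ger0_norm ?exprn_ge0 // mulrC.
  by apply: ler_wpM2r; [apply: exprn_ge0 | apply: sa_law_bound].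
- by apply: is_cvg_geometric_series; rewrite ger0_norm.
Qed.

Section Kern.
Variables (K : S -> A -> S -> R) (sg : S -> A -> R).
Hypothesis HK : is_kernel K.
Hypothesis Hs : is_policy sg.

Lemma disc_return_occ f rho0 :
  disc_return gamma K sg f rho0 =
  \sum_(s : S) \sum_(a : A) (\sum_(s' : S) K s a s' * f s a s') * occ K sg rho0 s a.
Proof.
rewrite /disc_return.
have E : (fun t => gamma ^+ t * exp_step K sg f rho0 t) =
  (fun t => \sum_(s : S) \sum_(a : A) (\sum_(s' : S) K s a s' * f s a s') *
              (gamma ^+ t * sa_law K sg rho0 t s a)).
  apply/funext => t; rewrite /exp_step mulr_sumr; apply: eq_bigr => s _.
  rewrite mulr_sumr; apply: eq_bigr => a _.
  rewrite mulr_sumr mulr_suml; apply: eq_bigr => s' _.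
  ring.
rewrite E; have [_ ->] := lim_series2 (fun s a => \sum_(s' : S) K s a s' * f s a s')
   (fun s a => @occ_cvg K sg rho0 s a HK Hs).
by [].
Qed.

Lemma occ_fix rho0 s' a' :
  occ K sg rho0 s' a' =
  rho0 s' a' + gamma * (\sum_(s : S) \sum_(a : A) occ K sg rho0 s a * K s a s') * sg s' a'.
Proof.
rewrite /occ; case: (series_shift (@occ_cvg K sg rho0 s' a' HK Hs)) => _ ->.
rewrite expr0 mul1r /=; congr (_ + _).
have E : (fun n => gamma ^+ n.+1 * sa_law K sg rho0 n.+1 s' a') =
  (fun n => \sum_(s : S) \sum_(a : A) (gamma * sg s' a' * K s a s') *
              (gamma ^+ n * sa_law K sg rho0 n s a)).
  apply/funext => n /=; rewrite exprS mulr_suml mulr_sumr; apply: eq_bigr => s _.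
  rewrite mulr_suml mulr_sumr; apply: eq_bigr => a _.
  ring.
rewrite E; have [_ ->] := lim_series2 (fun s a => gamma * sg s' a' * K s a s')
   (fun s a => @occ_cvg K sg rho0 s a HK Hs).
set L := fun s a => limn (series (fun t : nat => gamma ^+ t * sa_law K sg rho0 t s a)).
transitivity ((gamma * sg s' a') * \sum_(s : S) \sum_(a : A) L s a * K s a s'); last by ring.
rewrite mulr_sumr; apply: eq_bigr => s _.
rewrite mulr_sumr; apply: eq_bigr => a _.
rewrite /L; ring.
Qed.

Lemma sa_law_lin (I : finType) (w : I -> R) (rh : I -> S -> A -> R) t s a :
  sa_law K sg (fun s a => \sum_(i : I) w i * rh i s a) t s a =
  \sum_(i : I) w i * sa_law K sg (rh i) t s a.
Proof.
elim: t s a => [|t IH] s a //=.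

have -> : \sum_(s0 : S) \sum_(a0 : A) sa_law K sg (fun s1 a1 => \sum_i w i * rh i s1 a1) t s0 a0 * K s0 a0 s
  = \sum_(i : I) w i * \sum_(s0 : S) \sum_(a0 : A) sa_law K sg (rh i) t s0 a0 * K s0 a0 s.
  transitivity (\sum_(s0 : S) \sum_(a0 : A) \sum_(i : I) w i * (sa_law K sg (rh i) t s0 a0 * K s0 a0 s)).
    apply: eq_bigr => s0 _; apply: eq_bigr => a0 _; rewrite IH mulr_suml.
    by apply: eq_bigr => i _; rewrite mulrA.
  under eq_bigr do rewrite exchange_big /=.
  rewrite exchange_big /=; apply: eq_bigr => i _.
  rewrite mulr_sumr; apply: eq_bigr => s0 _.
  by rewrite mulr_sumr.
rewrite mulr_suml; apply: eq_bigr => i _; ring.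
Qed.

Lemma occ_lin (I : finType) (w : I -> R) (rh : I -> S -> A -> R) s a :
  occ K sg (fun s a => \sum_(i : I) w i * rh i s a) s a =
  \sum_(i : I) w i * occ K sg (rh i) s a.
Proof.
rewrite /occ.
have E : (fun t => gamma ^+ t * sa_law K sg (fun s a => \sum_(i : I) w i * rh i s a) t s a) =
  (fun t => \sum_(i : I) w i * (gamma ^+ t * sa_law K sg (rh i) t s a)).
  apply/funext => t; rewrite sa_law_lin mulr_sumr; apply: eq_bigr => i _; ring.
rewrite E; have [_ ->] := lim_series1 w (fun i => @occ_cvg K sg (rh i) s a HK Hs).
by [].
Qed.

Lemma sa_law_shift rho0 t s a :
  sa_law K sg rho0 t.+1 s a = sa_law K sg (sa_law K sg rho0 1) t s a.
Proof.
elim: t s a => [|t IH] s a //.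
transitivity ((\sum_(s0 : S) \sum_(a0 : A) sa_law K sg rho0 t.+1 s0 a0 * K s0 a0 s) * sg s a); first by [].
transitivity ((\sum_(s0 : S) \sum_(a0 : A) sa_law K sg (sa_law K sg rho0 1) t s0 a0 * K s0 a0 s) * sg s a); last by [].
congr (_ * _); apply: eq_bigr => s0 _; apply: eq_bigr => a0 _.
by rewrite IH.
Qed.

Lemma occ_step rho0 s a :
  occ K sg rho0 s a = rho0 s a + gamma * occ K sg (sa_law K sg rho0 1) s a.
Proof.
rewrite /occ; case: (series_shift (@occ_cvg K sg rho0 s a HK Hs)) => _ ->.
rewrite expr0 mul1r /=; congr (_ + _).
have E : (fun n => gamma ^+ n.+1 * sa_law K sg rho0 n.+1 s a) =
  (fun n => gamma * (gamma ^+ n * sa_law K sg (sa_law K sg rho0 1) n s a)).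
  by apply/funext => n; rewrite sa_law_shift exprS mulrA.
rewrite E.
have E2 : series (fun n => gamma * (gamma ^+ n * sa_law K sg (sa_law K sg rho0 1) n s a)) =
   (fun n => gamma * series (fun n => gamma ^+ n * sa_law K sg (sa_law K sg rho0 1) n s a) n).
  by apply/funext => n; rewrite /series /= mulr_sumr.
by rewrite E2 limn_scale //; apply: occ_cvg.
Qed.

Lemma sa_law_ge0 rho0 t s a : (forall s a, 0 <= rho0 s a) -> 0 <= sa_law K sg rho0 t s a.
Proof.
move=> H; elim: t s a => [|t IH] s a //=.
apply: mulr_ge0; last exact: (Hs s).1.
apply: sumr_ge0 => s0 _; apply: sumr_ge0 => a0 _; apply: mulr_ge0 => //.
exact: (HK s0 a0).1.
Qed.

Lemma occ_ge0 rho0 s a : (forall s a, 0 <= rho0 s a) -> 0 <= occ K sg rho0 s a.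
Proof.
move=> H; rewrite /occ; apply: limr_ge; first exact: occ_cvg.
apply: nearW => n; apply: sumr_ge0 => i _; apply: mulr_ge0; first exact: exprn_ge0.
exact: sa_law_ge0.
Qed.

Lemma disc_return_lin f (I : finType) (w : I -> R) (rh : I -> S -> A -> R) :
  disc_return gamma K sg f (fun s a => \sum_(i : I) w i * rh i s a) =
  \sum_(i : I) w i * disc_return gamma K sg f (rh i).
Proof.
rewrite disc_return_occ.
under eq_bigr do under eq_bigr do rewrite occ_lin mulr_sumr.
under [RHS]eq_bigr do rewrite disc_return_occ mulr_sumr.
under eq_bigr do rewrite exchange_big /=.
rewrite exchange_big /=; apply: eq_bigr => i _; apply: eq_bigr => s _.
rewrite mulr_sumr; apply: eq_bigr => a _; ring.
Qed.

Lemma disc_return_step f rho0 :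
  disc_return gamma K sg f rho0 =
  \sum_(s : S) \sum_(a : A) rho0 s a * (\sum_(s' : S) K s a s' * f s a s')
  + gamma * disc_return gamma K sg f (sa_law K sg rho0 1).
Proof.
rewrite !disc_return_occ.
under eq_bigr do under eq_bigr do rewrite occ_step.
rewrite mulr_sumr -big_split /=; apply: eq_bigr => s _.
rewrite mulr_sumr -big_split /=; apply: eq_bigr => a _.
ring.
Qed.

End Kern.

Lemma sum_ind (T : finType) (y : T) (g : T -> R) : \sum_(x : T) (x == y)%:R * g x = g y.
Proof.
rewrite (bigD1 y) //= eqxx mul1r big1 ?addr0 // => x /negbTE ->.
by rewrite mul0r.
Qed.

Lemma sum_ind2 (s : S) (a : A) (g : S -> A -> R) :
  \sum_(s0 : S) \sum_(a0 : A) ((s0 == s) && (a0 == a))%:R * g s0 a0 = g s a.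
Proof.
rewrite -(sum_ind s (fun s0 => g s0 a)); apply: eq_bigr => s0 _.
case: eqP => [->|_] /=.
  by rewrite mul1r; apply: sum_ind.
by rewrite mul0r big1 // => a0 _; rewrite mul0r.
Qed.

Section Bellman.
Variables (K : S -> A -> S -> R) (sg : S -> A -> R) (f : S -> A -> S -> R).
Hypothesis HK : is_kernel K.
Hypothesis Hs : is_policy sg.

Lemma Q_bellman s a :
  Qfun gamma K sg f s a =
  \sum_(s' : S) K s a s' * (f s a s' + gamma * Vfun gamma K sg f s').
Proof.
rewrite /Qfun disc_return_step //.
rewrite (sum_ind2 s a (fun s0 a0 => \sum_(s' : S) K s0 a0 s' * f s0 a0 s')).
have -> : sa_law K sg (fun s0 a0 => ((s0 == s) && (a0 == a))%:R) 1 =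
   (fun s0 a0 => \sum_(s'' : S) K s a s'' * ((s0 == s'')%:R * sg s0 a0)).
  apply/funext => s0; apply/funext => a0 /=.
  rewrite (sum_ind2 s a (fun s1 a1 => K s1 a1 s0)).
  rewrite (eq_bigr (fun s'' => (s'' == s0)%:R * (K s a s'' * sg s0 a0))).
    by rewrite sum_ind.
  move=> s'' _; rewrite [s0 == s'']eq_sym; ring.
rewrite disc_return_lin // -/(Vfun _ _ _ _ _).
rewrite mulr_sumr -big_split /=; apply: eq_bigr => s' _.
rewrite /Vfun; ring.
Qed.

Lemma V_Q s : Vfun gamma K sg f s = \sum_(a : A) sg s a * Qfun gamma K sg f s a.
Proof.
rewrite /Vfun /Qfun -disc_return_lin //.
congr disc_return; apply/funext => s0; apply/funext => a0.
case: eqP => [->|_] /=.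
  rewrite mul1r (eq_bigr (fun a => (a == a0)%:R * sg s a)) ?sum_ind //.
  by move=> a _; rewrite eq_sym mulrC.
by rewrite mul0r big1 // => a _; rewrite mulr0.
Qed.

End Bellman.
Definition nocc (K : S -> A -> S -> R) (sg : S -> A -> R) (mu : S -> R) (s : S) : R :=
  \sum_(a : A) occ K sg (fun s a => mu s * sg s a) s a.

Definition kst (sg : S -> A -> R) (K : S -> A -> S -> R) (s s' : S) : R :=
  \sum_(a : A) sg s a * K s a s'.

Definition Gf (f : S -> A -> S -> R) (V : S -> R) (sg : S -> A -> R) (K : S -> A -> S -> R) (s : S) : R :=
  \sum_(a : A) sg s a * \sum_(s' : S) K s a s' * (f s a s' + gamma * V s' - V s).

Lemma aff_sum (I : finType) (w x y : I -> R) (z c : R) : \sum_(i : I) w i = 1 ->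
  \sum_(i : I) w i * (x i + c * y i - z) = \sum_(i : I) w i * x i + c * \sum_(i : I) w i * y i - z.
Proof.
move=> H; rewrite (eq_bigr (fun i => w i * x i + c * (w i * y i) - z * w i)); last by move=> i _; ring.
by rewrite sumrB big_split /= -!mulr_sumr H mulr1.
Qed.

Section Occ.
Variables (K : S -> A -> S -> R) (sg : S -> A -> R) (mu : S -> R).
Hypothesis HK : is_kernel K.
Hypothesis Hs : is_policy sg.
Hypothesis Hmu : is_distr mu.

Let X s' := \sum_(s : S) \sum_(a : A) occ K sg (fun s a => mu s * sg s a) s a * K s a s'.

Lemma nocc_X s : nocc K sg mu s = mu s + gamma * X s.
Proof.
rewrite /nocc; under eq_bigr do rewrite occ_fix //.
rewrite big_split /= -!mulr_sumr (Hs s).2 -/(X s); ring.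
Qed.

Lemma occ_nocc s a : occ K sg (fun s a => mu s * sg s a) s a = nocc K sg mu s * sg s a.
Proof. by rewrite occ_fix // nocc_X -/(X s); ring. Qed.

Lemma nocc_fix s' : nocc K sg mu s' = mu s' + gamma * \sum_(s : S) nocc K sg mu s * kst sg K s s'.
Proof.
rewrite nocc_X /X; congr (_ + _ * _); apply: eq_bigr => s _.
rewrite /kst mulr_sumr; apply: eq_bigr => a _; rewrite occ_nocc; ring.
Qed.

Lemma nocc_ge0 s : 0 <= nocc K sg mu s.
Proof.
apply: sumr_ge0 => a _; apply: occ_ge0 => // s0 a0.
by apply: mulr_ge0; [exact: Hmu.1 | exact: (Hs s0).1].
Qed.

Lemma kst_sum s : \sum_(s' : S) kst sg K s s' = 1.
Proof.
rewrite /kst exchange_big /= -(Hs s).2; apply: eq_bigr => a _.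
by rewrite -mulr_sumr (HK s a).2 mulr1.
Qed.

Lemma nocc_sum : (1 - gamma) * \sum_(s : S) nocc K sg mu s = 1.
Proof.
have E : \sum_(s : S) nocc K sg mu s = 1 + gamma * \sum_(s : S) nocc K sg mu s.
  rewrite {1}(eq_bigr _ (fun s' _ => nocc_fix s')).
  rewrite big_split /= Hmu.2 -mulr_sumr exchange_big /=; congr (_ + _ * _).
  by apply: eq_bigr => s _; rewrite -mulr_sumr kst_sum mulr1.
rewrite mulrBl mul1r {1}E; ring.
Qed.

Lemma J_decomp f (V : S -> R) :
  Jret gamma K mu sg f = \sum_(s : S) mu s * V s + \sum_(s : S) nocc K sg mu s * Gf f V sg K s.
Proof.
rewrite /Jret disc_return_occ //.
under eq_bigr do under eq_bigr do rewrite occ_nocc.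
have G1 : forall s, Gf f V sg K s = \sum_(a : A) sg s a * (\sum_(s' : S) K s a s' * f s a s')
     + gamma * (\sum_(s' : S) kst sg K s s' * V s') - V s.
  move=> s; rewrite /Gf.
  under eq_bigr => a _ do rewrite (aff_sum (f s a) V (V s) gamma (HK s a).2).
  rewrite (aff_sum _ _ (V s) gamma (Hs s).2); congr (_ + _ * _ - _).
  rewrite /kst; under [RHS]eq_bigr do rewrite mulr_suml.
  rewrite [RHS]exchange_big /=; apply: eq_bigr => a _; rewrite mulr_sumr; apply: eq_bigr => s' _; ring.
under [X in _ = _ + X]eq_bigr do rewrite G1.
have E : \sum_(s : S) nocc K sg mu s * (gamma * \sum_(s' : S) kst sg K s s' * V s')
       = \sum_(s' : S) (nocc K sg mu s' - mu s') * V s'.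
  transitivity (\sum_(s' : S) (gamma * \sum_(s : S) nocc K sg mu s * kst sg K s s') * V s').
    under eq_bigr do rewrite mulr_sumr mulr_sumr.
    rewrite exchange_big /=; apply: eq_bigr => s' _; rewrite mulr_sumr mulr_suml.
    by apply: eq_bigr => s _; ring.
  by apply: eq_bigr => s' _; rewrite [in RHS]nocc_fix; ring.
have L1 : \sum_(s : S) \sum_(a : A) (\sum_(s' : S) K s a s' * f s a s') * (nocc K sg mu s * sg s a)
   = \sum_(s : S) nocc K sg mu s * \sum_(a : A) sg s a * (\sum_(s' : S) K s a s' * f s a s').
  apply: eq_bigr => s _; rewrite mulr_sumr; apply: eq_bigr => a _; ring.
have R1 : forall (P Q : S -> R), \sum_(s : S) nocc K sg mu s * (P s + gamma * Q s - V s) =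
   \sum_(s : S) nocc K sg mu s * P s + \sum_(s : S) nocc K sg mu s * (gamma * Q s)
   - \sum_(s : S) nocc K sg mu s * V s.
  move=> P Q; rewrite -big_split -sumrB /=; apply: eq_bigr => s _; ring.
have R2 : \sum_(s' : S) (nocc K sg mu s' - mu s') * V s' =
   \sum_(s : S) nocc K sg mu s * V s - \sum_(s : S) mu s * V s.
  rewrite -sumrB; apply: eq_bigr => s _; ring.
rewrite L1 R1 E R2; ring.
Qed.


End Occ.
Lemma dstate_nocc (K : S -> A -> S -> R) (sg : S -> A -> R) (mu : S -> R) s :
  is_kernel K -> is_policy sg ->
  dstate gamma K mu sg s = (1 - gamma) * nocc K sg mu s.
Proof.
move=> HK Hs; rewrite /dstate /nocc; congr (_ * _).
have E : (fun t => gamma ^+ t * \sum_(a : A) sa_law K sg (fun s0 a0 => mu s0 * sg s0 a0) t s a) =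
   (fun t => \sum_(a : A) 1 * (gamma ^+ t * sa_law K sg (fun s0 a0 => mu s0 * sg s0 a0) t s a)).
  by apply/funext => t; rewrite mulr_sumr; apply: eq_bigr => a _; rewrite mul1r.
rewrite E; have [_ ->] := lim_series1 (fun _ => 1)
   (fun a => @occ_cvg K sg (fun s0 a0 => mu s0 * sg s0 a0) s a HK Hs).
by apply: eq_bigr => a _; rewrite mul1r.
Qed.

Section Model.
Variables (Pm : S -> A -> S -> R) (pi : S -> A -> R) (f : S -> A -> S -> R).
Hypothesis HPm : is_kernel Pm.
Hypothesis Hpi : is_policy pi.

Lemma A_G (sg : S -> A -> R) s : is_policy sg ->
  \sum_(a : A) sg s a * Afun gamma Pm pi f s a = Gf f (Vfun gamma Pm pi f) sg Pm s.
Proof.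
move=> Hs; rewrite /Afun /Gf; apply: eq_bigr => a _; congr (_ * _).
rewrite Q_bellman //.
rewrite [RHS](eq_bigr (fun s' => Pm s a s' * (f s a s' + gamma * Vfun gamma Pm pi f s') - Vfun gamma Pm pi f s * Pm s a s')); last by move=> s' _; ring.
by rewrite sumrB -mulr_sumr (HPm s a).2 mulr1.
Qed.

Lemma G_zero s : Gf f (Vfun gamma Pm pi f) pi Pm s = 0.
Proof.
rewrite -A_G // /Afun.
rewrite (eq_bigr (fun a => pi s a * Qfun gamma Pm pi f s a - Vfun gamma Pm pi f s * pi s a)); last by move=> a _; ring.
by rewrite sumrB -mulr_sumr (Hpi s).2 mulr1 -V_Q // subrr.
Qed.

End Model.
Definition GG (d : S -> A -> S -> R) (sg : S -> A -> R) (K : S -> A -> S -> R) (s : S) : R :=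
  \sum_(a : A) sg s a * \sum_(s' : S) K s a s' * d s a s'.

Lemma GG_bound d sg K s (c b dm : R) :
  0 <= b -> 0 <= dm ->
  \sum_(a : A) `|sg s a| <= c ->
  (forall a, \sum_(s' : S) `|K s a s'| <= b) ->
  (forall a s', `|d s a s'| <= dm) ->
  `|GG d sg K s| <= c * b * dm.
Proof.
move=> b0 dm0 Hc Hb Hd; rewrite /GG.
apply: le_trans (ler_norm_sum _ _ _) _.
apply: (@le_trans _ _ (\sum_(a : A) `|sg s a| * (b * dm))); last first.
  by rewrite -mulr_suml mulrA; apply: ler_wpM2r => //; apply: ler_wpM2r.
apply: ler_sum => a _; rewrite normrM; apply: ler_wpM2l => //.
apply: le_trans (ler_norm_sum _ _ _) _.
apply: (@le_trans _ _ (\sum_(s' : S) `|K s a s'| * dm)); last first.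
  by rewrite -mulr_suml; apply: ler_wpM2r => //.
by apply: ler_sum => s' _; rewrite normrM; apply: ler_wpM2l.
Qed.

Lemma GG_subl d sg1 sg2 K s :
  GG d (fun s a => sg1 s a - sg2 s a) K s = GG d sg1 K s - GG d sg2 K s.
Proof. by rewrite /GG -sumrB; apply: eq_bigr => a _; ring. Qed.

Lemma GG_subr d sg K1 K2 s :
  GG d sg (fun s a s' => K1 s a s' - K2 s a s') s = GG d sg K1 s - GG d sg K2 s.
Proof.
rewrite /GG -sumrB; apply: eq_bigr => a _; rewrite -mulrBr; congr (_ * _).
by rewrite -sumrB; apply: eq_bigr => s' _; ring.
Qed.

Lemma kst_diff sg1 sg2 K1 K2 s (c b : R) :
  is_kernel K1 -> is_policy sg2 ->
  \sum_(a : A) `|sg1 s a - sg2 s a| <= c ->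
  (forall a, \sum_(s' : S) `|K1 s a s' - K2 s a s'| <= b) ->
  \sum_(s' : S) `|kst sg1 K1 s s' - kst sg2 K2 s s'| <= c + b.
Proof.
move=> HK Hs Hc Hb.
apply: (@le_trans _ _ (\sum_(s' : S) \sum_(a : A)
     (`|sg1 s a - sg2 s a| * K1 s a s' + sg2 s a * `|K1 s a s' - K2 s a s'|))).
  apply: ler_sum => s' _; rewrite /kst -sumrB.
  apply: le_trans (ler_norm_sum _ _ _) _; apply: ler_sum => a _.
  have -> : sg1 s a * K1 s a s' - sg2 s a * K2 s a s' =
     (sg1 s a - sg2 s a) * K1 s a s' + sg2 s a * (K1 s a s' - K2 s a s') by ring.
  apply: le_trans (ler_normD _ _) _; apply: lerD.
    by rewrite normrM (ger0_norm ((HK s a).1 s')).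
  by rewrite normrM (ger0_norm ((Hs s).1 a)).
rewrite exchange_big /=; under eq_bigr do rewrite big_split /=. rewrite big_split /=; apply: lerD.
  by rewrite (eq_bigr (fun a => `|sg1 s a - sg2 s a|)) // => a _; rewrite -mulr_sumr (HK s a).2 mulr1.
apply: (@le_trans _ _ (\sum_(a : A) sg2 s a * b)).
  by apply: ler_sum => a _; rewrite -mulr_sumr; apply: ler_wpM2l; [exact: (Hs s).1 | exact: Hb].
by rewrite -mulr_suml (Hs s).2 mul1r.
Qed.

Lemma pert (mu n1 n2 : S -> R) (k1 k2 : S -> S -> R) (B : R) :
  (forall s', n1 s' = mu s' + gamma * \sum_(s : S) n1 s * k1 s s') ->
  (forall s', n2 s' = mu s' + gamma * \sum_(s : S) n2 s * k2 s s') ->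
  (forall s s', 0 <= k1 s s') -> (forall s, \sum_(s' : S) k1 s s' = 1) ->
  (forall s, 0 <= n2 s) ->
  (forall s, \sum_(s' : S) `|k1 s s' - k2 s s'| <= B) ->
  (1 - gamma) * \sum_(s : S) `|n1 s - n2 s| <= gamma * (B * \sum_(s : S) n2 s).
Proof.
move=> Hn1 Hn2 Hk0 Hk1 Hn0 HB.
set D := \sum_(s : S) `|n1 s - n2 s|.
have H1 : forall s', `|n1 s' - n2 s'| <= gamma * (\sum_(s : S) `|n1 s - n2 s| * k1 s s'
     + \sum_(s : S) n2 s * `|k1 s s' - k2 s s'|).
  move=> s'.
  have -> : n1 s' - n2 s' = gamma * (\sum_(s : S) (n1 s - n2 s) * k1 s s'
     + \sum_(s : S) n2 s * (k1 s s' - k2 s s')).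
    rewrite {1}Hn1 Hn2 -big_split /=.
    have -> : \sum_(s : S) ((n1 s - n2 s) * k1 s s' + n2 s * (k1 s s' - k2 s s'))
       = \sum_(s : S) n1 s * k1 s s' - \sum_(s : S) n2 s * k2 s s'.
      by rewrite -sumrB; apply: eq_bigr => s _; ring.
    ring.
  rewrite normrM ger0_norm //; apply: ler_wpM2l => //.
  apply: le_trans (ler_normD _ _) _; apply: lerD.
    apply: le_trans (ler_norm_sum _ _ _) _; apply: ler_sum => s _.
    by rewrite normrM (ger0_norm (Hk0 s s')).
  apply: le_trans (ler_norm_sum _ _ _) _; apply: ler_sum => s _.
  by rewrite normrM (ger0_norm (Hn0 s)).
have H2 : D <= gamma * (D + B * \sum_(s : S) n2 s).
  apply: le_trans (ler_sum _ (fun s' _ => H1 s')) _.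
  rewrite -mulr_sumr; apply: ler_wpM2l => //.
  rewrite big_split /=; apply: lerD.
    rewrite exchange_big /= /D; rewrite (eq_bigr (fun s => `|n1 s - n2 s|)) //.
    by move=> s _; rewrite -mulr_sumr Hk1 mulr1.
  rewrite exchange_big /= mulr_sumr; apply: ler_sum => s _.
  by rewrite -mulr_sumr mulrC; apply: ler_wpM2r => //.
move: H2; rewrite mulrDr => H2.
have : D - gamma * D <= gamma * (B * \sum_(s : S) n2 s) by rewrite lerBlDr addrC.
by rewrite mulrBl mul1r.
Qed.

Lemma wsum_bound (w Y : S -> R) (b : R) :
  (forall s, `|Y s| <= b) ->
  `|\sum_(s : S) w s * Y s| <= (\sum_(s : S) `|w s|) * b.
Proof.
move=> H; apply: le_trans (ler_norm_sum _ _ _) _; rewrite mulr_suml.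
by apply: ler_sum => s _; rewrite normrM; apply: ler_wpM2l.
Qed.

Lemma main_f (P Pm : S -> A -> S -> R) (mu : S -> R) (pi pi' : S -> A -> R)
   (f : S -> A -> S -> R) :
  is_kernel P -> is_distr mu -> is_kernel Pm -> is_policy pi -> is_policy pi' ->
  two_sided_bound gamma P Pm mu pi pi' f.
Proof.
move=> HP Hmu HPm Hpi Hpi'.
set V := Vfun gamma Pm pi f.
set d := fun s a s' => f s a s' + gamma * V s' - V s.
set ep := eps_pi pi pi'; set em := eps_m P Pm; set dm := delta_max gamma Pm pi f.
set n1 := nocc P pi' mu; set n := nocc P pi mu; set nm := nocc Pm pi mu.
set G1 := GG d pi' P; set G2 := GG d pi P; set G3 := GG d pi' Pm.
have gn0 : 0 < 1 - gamma by rewrite subr_gt0.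
have gne : 1 - gamma != 0 by rewrite gt_eqF.
have ep0 : 0 <= ep by apply: bigmax_ge_id.
have em0 : 0 <= em by apply: bigmax_ge_id.
have dm0 : 0 <= dm by apply: bigmax_ge_id.
have Hep : forall s, \sum_(a : A) `|pi' s a - pi s a| <= 2 * ep.
  move=> s; apply: (@le_trans _ _ (2 * dTV (pi' s) (pi s))).
    by rewrite /dTV mulrA divff ?mul1r // pnatr_eq0.
  apply: ler_wpM2l => //; exact: (le_bigmax _ (fun s => dTV (pi' s) (pi s)) s).
have Hem : forall s a, \sum_(s' : S) `|P s a s' - Pm s a s'| <= 2 * em.
  move=> s a; apply: (@le_trans _ _ (2 * dTV (P s a) (Pm s a))).
    by rewrite /dTV mulrA divff ?mul1r // pnatr_eq0.
  apply: ler_wpM2l => //.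
  exact: (le_bigmax _ (fun sa : S * A => dTV (P sa.1 sa.2) (Pm sa.1 sa.2)) (s, a)).
have Hd : forall s a s', `|d s a s'| <= dm.
  move=> s a s'.
  exact: (le_bigmax _ (fun x : S * A * S => `|f x.1.1 x.1.2 x.2 + gamma * Vfun gamma Pm pi f x.2
        - Vfun gamma Pm pi f x.1.1|) (s, a, s')).
have G4 : forall s, GG d pi Pm s = 0 by move=> s; exact: (G_zero f HPm Hpi s).
have HdJ : Jret gamma P mu pi' f - Jret gamma P mu pi f =
    \sum_(s : S) n1 s * G1 s - \sum_(s : S) n s * G2 s.
  rewrite (J_decomp mu HP Hpi' f V) (J_decomp mu HP Hpi f V); rewrite /n1 /n /G1 /G2 /GG /Gf; ring.
have HL : Lsurr gamma Pm mu pi pi' f = (1 - gamma) * \sum_(s : S) nm s * G3 s.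
  rewrite /Lsurr mulr_sumr; apply: eq_bigr => s _.
  rewrite dstate_nocc // (A_G f HPm Hpi s Hpi'); rewrite /nm /G3 /GG /Gf; ring.
have N1 : \sum_(s : S) n1 s = (1 - gamma)^-1.
  by apply: (mulfI gne); rewrite mulfV //; exact: (nocc_sum HP Hpi' Hmu).
have N0 : \sum_(s : S) n s = (1 - gamma)^-1.
  by apply: (mulfI gne); rewrite mulfV //; exact: (nocc_sum HP Hpi Hmu).
have Nm : \sum_(s : S) nm s = (1 - gamma)^-1.
  by apply: (mulfI gne); rewrite mulfV //; exact: (nocc_sum HPm Hpi Hmu).
set Y1 := GG d (fun s a => pi' s a - pi s a) (fun s a s' => P s a s' - Pm s a s').
set Y2 := GG d pi (fun s a s' => P s a s' - Pm s a s').
set Y3 := GG d (fun s a => pi' s a - pi s a) Pm.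
have HX : \sum_(s : S) n1 s * G1 s - \sum_(s : S) n s * G2 s - \sum_(s : S) nm s * G3 s =
  \sum_(s : S) n1 s * Y1 s + \sum_(s : S) (n1 s - n s) * Y2 s + \sum_(s : S) (n1 s - nm s) * Y3 s.
  rewrite -!sumrB -!big_split /=; apply: eq_bigr => s _.
  rewrite /Y1 /Y2 /Y3 !GG_subl !GG_subr -/(G1 s) -/(G2 s) -/(G3 s) !G4; ring.
have B1 : `|\sum_(s : S) n1 s * Y1 s| <= (1 - gamma)^-1 * (2 * ep * (2 * em) * dm).
  have -> : (1 - gamma)^-1 = \sum_(s : S) `|n1 s|.
    by rewrite -N1; apply: eq_bigr => s _; rewrite ger0_norm //; apply: (nocc_ge0 HP Hpi' Hmu).
  apply: wsum_bound => s; apply: GG_bound.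
  - by rewrite mulr_ge0.
  - done.
  - exact: Hep.
  - exact: Hem.
  - exact: Hd.
set D1 := \sum_(s : S) `|n1 s - n s|.
set D2 := \sum_(s : S) `|n1 s - nm s|.
have B2 : `|\sum_(s : S) (n1 s - n s) * Y2 s| <= D1 * (1 * (2 * em) * dm).
  apply: wsum_bound => s; apply: GG_bound.
  - by rewrite mulr_ge0.
  - done.
  - by rewrite (eq_bigr (fun a => pi s a)) ?(Hpi s).2 // => a _; rewrite ger0_norm //; exact: (Hpi s).1.
  - exact: Hem.
  - exact: Hd.
have B3 : `|\sum_(s : S) (n1 s - nm s) * Y3 s| <= D2 * (2 * ep * 1 * dm).
  apply: wsum_bound => s; apply: GG_bound.
  - done.
  - done.
  - exact: Hep.
  - by move=> a; rewrite (eq_bigr (fun s' => Pm s a s')) ?(HPm s a).2 // => s' _; rewrite ger0_norm //; exact: (HPm s a).1.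
  - exact: Hd.
have kge0 : forall sg K, is_kernel K -> is_policy sg -> forall s s', 0 <= kst sg K s s'.
  move=> sg K HK Hs s s'; apply: sumr_ge0 => a _; apply: mulr_ge0; [exact: (Hs s).1 | exact: (HK s a).1].
have PD1 : (1 - gamma) * D1 <= gamma * ((2 * ep + 0) * \sum_(s : S) n s).
  apply: (@pert mu n1 n (kst pi' P) (kst pi P)).
  - by move=> s'; apply: (@nocc_fix _ _ mu HP Hpi').
  - by move=> s'; apply: (@nocc_fix _ _ mu HP Hpi).
  - exact: kge0.
  - exact: (kst_sum HP Hpi').
  - exact: (nocc_ge0 HP Hpi Hmu).
  - move=> s; apply: (kst_diff (c:=2*ep) (b:=0) HP Hpi (Hep s)).
    by move=> a; rewrite big1 // => s' _; rewrite subrr normr0.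
have PD2 : (1 - gamma) * D2 <= gamma * ((2 * ep + 2 * em) * \sum_(s : S) nm s).
  apply: (@pert mu n1 nm (kst pi' P) (kst pi Pm)).
  - by move=> s'; apply: (@nocc_fix _ _ mu HP Hpi').
  - by move=> s'; apply: (@nocc_fix _ _ mu HPm Hpi).
  - exact: kge0.
  - exact: (kst_sum HP Hpi').
  - exact: (nocc_ge0 HPm Hpi Hmu).
  - move=> s; apply: (kst_diff (c:=2*ep) (b:=2*em) HP Hpi (Hep s)).
    exact: Hem.
rewrite N0 in PD1; rewrite Nm in PD2.
have D1b : D1 <= gamma * ((2 * ep + 0) * (1 - gamma)^-1) / (1 - gamma).
  by rewrite ler_pdivlMr // mulrC.
have D2b : D2 <= gamma * ((2 * ep + 2 * em) * (1 - gamma)^-1) / (1 - gamma).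
  by rewrite ler_pdivlMr // mulrC.
have key : `|(Jret gamma P mu pi' f - Jret gamma P mu pi f) - Lsurr gamma Pm mu pi pi' f / (1 - gamma)|
     <= 4 * dm * eps_total gamma P Pm pi pi' / (1 - gamma).
  have -> : Lsurr gamma Pm mu pi pi' f / (1 - gamma) = \sum_(s : S) nm s * G3 s.
    by rewrite HL; field.
  rewrite HdJ HX.
  apply: le_trans (ler_normD _ _) _.
  apply: le_trans (lerD (ler_normD _ _) (lexx _)) _.
  apply: le_trans (lerD (lerD B1 B2) B3) _.
  apply: (@le_trans _ _ ((1 - gamma)^-1 * (2 * ep * (2 * em) * dm)
     + gamma * ((2 * ep + 0) * (1 - gamma)^-1) / (1 - gamma) * (1 * (2 * em) * dm)
     + gamma * ((2 * ep + 2 * em) * (1 - gamma)^-1) / (1 - gamma) * (2 * ep * 1 * dm))).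
    apply: lerD; first apply: lerD => //.
      by apply: ler_wpM2r => //; rewrite !mulr_ge0.
    by apply: ler_wpM2r => //; rewrite !mulr_ge0.
  rewrite /eps_total -/ep -/em; rewrite le_eqVlt; apply/orP; left; apply/eqP; field.
  by [].
move: key; rewrite ler_norml => /andP [h1 h2].
rewrite /two_sided_bound /= -/dm.
move: h1 h2.
set E := 4 * dm * eps_total gamma P Pm pi pi' / (1 - gamma).
set Lq := Lsurr gamma Pm mu pi pi' f / (1 - gamma).
set J1 := Jret gamma P mu pi' f; set J0 := Jret gamma P mu pi f.
move=> h1 h2; split; lra.
Qed.

End MDP.

Unset Implicit Arguments.
Set Strict Implicit.
Close Scope classical_set_scope.

Theorem mainTheorem1 (R : realType) (S A : finType)
    (r : S -> A -> S -> R) (k : nat) (c : 'I_k -> S -> A -> S -> R)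
    (P : S -> A -> S -> R) (mu : S -> R) (D : 'I_k -> R)
    (gamma : R) (Pm : S -> A -> S -> R) (pi pi' : S -> A -> R) :
  is_kernel P -> is_distr mu -> 0 <= gamma -> gamma < 1 ->
  is_kernel Pm -> is_policy pi -> is_policy pi' ->
  two_sided_bound gamma P Pm mu pi pi' r /\
  (forall i : 'I_k, two_sided_bound gamma P Pm mu pi pi' (c i)).
Proof.
move=> HP Hmu g0 g1 HPm Hpi Hpi'; split.
  by apply: main_f.
by move=> i; apply: main_f.
Qed.
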